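(* Let $n,k,d$ be positive integers such that $k^{1/d}$ is an integer. Then $\textsc{sub-pmm}_{n,k}$ is solvable by monotone formulas of size at most $k n^{d k^{1/d}}$ of each of the following types: (I) $\Sigma_{2d}$ formulas with $\bigwedge$-fan-in $k^{1/d}$ (and $\bigvee$-fan-in $n^{k^{1/d}}$); (II) $\Sigma_{d+1}$ formulas, and also $\Pi_{d+1}$ formulas (with fan-in $k^{1/d}n^{k^{1/d}}$).
   Context: An $AC^0$ formula on variables $X_1,\dots,X_N$ is a rooted tree whose leaves are labeled by a constant $0$ or $1$ or a literal $X_i$ or $\neg X_i$ and whose non-leaves (gates) are labeled by $\bigwedge$ or $\bigvee$ (unbounded fan-in). It is monotone if no leaf is labeled $\neg X_i$. Size is the number of leaves labeled by literals; depth is the maximum number of gates on a root-to-leaf path; fan-in (resp. $\bigwedge$-fan-in, $\bigvee$-fan-in) is the maximum number of children of any gate (resp. $\bigwedge$-gate, $\bigvee$-gate). Depth-$0$ formulas (literals) are both $\Sigma_0$ and $\Pi_0$ formulas. For $d\ge1$, a $\Sigma_d$ formula (resp. $\Pi_d$ formula) is either a $\Pi_{d-1}$ formula (resp. $\Sigma_{d-1}$ formula) or a depth-$d$ formula whose output gate is labeled $\bigvee$ (resp. $\bigwedge$). $\textsc{sub-pmm}_{n,k}$: the input is $k$ Boolean matrices $M^{(1)},\dots,M^{(k)}\in\{0,1\}^{n\times n}$ ($kn^2$ variables). A sub-permutation matrix is a $0/1$ matrix with at most one $1$ in each row and column. A formula solves $\textsc{sub-pmm}_{n,k}$ if on every input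 where all $M^{(i)}$ are sub-permutation matrices it outputs $\bigvee_{a_1,\dots,a_{k-1}\in[n]} M^{(1)}_{1,a_1}\wedge M^{(2)}_{a_1,a_2}\wedge\cdots\wedge M^{(k)}_{a_{k-1},1}$. *)

(* Defs.v *)
From mathcomp Require Import all_boot.
Set Implicit Arguments. Unset Strict Implicit. Unset Printing Implicit Defensive.

Inductive formula (V : Type) : Type :=
| FConst of bool
| FLit of V & bool
| FAnd of seq (formula V)
| FOr of seq (formula V).
Arguments FConst {V} b.
Arguments FLit {V} v pos.
Arguments FAnd {V} fs.
Arguments FOr {V} fs.

Section Formulas.
Variable V : Type.

Fixpoint eval (a : V -> bool) (f : formula V) : bool :=
  match f with
  | FConst b => b
  | FLit v pos => if pos then a v else ~~ a v
  | FAnd fs => all (eval a) fs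
  | FOr fs => has (eval a) fs
  end.

Fixpoint monotone (f : formula V) : bool :=
  match f with
  | FConst _ => true
  | FLit _ pos => pos
  | FAnd fs | FOr fs => all monotone fs
  end.

Fixpoint fsize (f : formula V) : nat :=
  match f with
  | FConst _ => 0
  | FLit _ _ => 1
  | FAnd fs | FOr fs => sumn (map fsize fs)
  end.

Fixpoint depth (f : formula V) : nat :=
  match f with
  | FConst _ | FLit _ _ => 0
  | FAnd fs | FOr fs => (foldr maxn 0 (map depth fs)).+1
  end.

Fixpoint and_fanin (f : formula V) : nat :=
  match f with
  | FConst _ | FLit _ _ => 0
  | FAnd fs => maxn (size fs) (foldr maxn 0 (map and_fanin fs))
  | FOr fs => foldr maxn 0 (map and_fanin fs)
  end.

Fixpoint or_fanin (f : formula V) : nat :=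
  match f with
  | FConst _ | FLit _ _ => 0
  | FAnd fs => foldr maxn 0 (map or_fanin fs)
  | FOr fs => maxn (size fs) (foldr maxn 0 (map or_fanin fs))
  end.

Definition fanin (f : formula V) : nat := maxn (and_fanin f) (or_fanin f).

Definition is_or_gate (f : formula V) : bool :=
  if f is FOr _ then true else false.
Definition is_and_gate (f : formula V) : bool :=
  if f is FAnd _ then true else false.

Fixpoint is_sigma (d : nat) (f : formula V) : bool :=
  match d with
  | 0 => depth f == 0
  | d'.+1 => is_pi d' f || ((depth f == d) && is_or_gate f)
  end
with is_pi (d : nat) (f : formula V) : bool :=
  match d with
  | 0 => depth f == 0
  | d'.+1 => is_sigma d' f || ((depth f == d) && is_and_gate f)
  end.

End Formulas.

(* SUB-PMM_{n,k}: variables are M^{(i)}_{r,c} for i : 'I_k, r c : 'I_n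
   (row/column index 1 of the paper is the ordinal 0). *)
Definition pmm_var (n k : nat) := ('I_k * 'I_n * 'I_n)%type.

Definition entry (n k : nat) (a : pmm_var n k -> bool) (i : 'I_k) (r c : 'I_n)
  : bool := a (i, r, c).

Definition sub_perm_input (n k : nat) (a : pmm_var n k -> bool) : Prop :=
  forall i : 'I_k,
    (forall r c c', entry a i r c -> entry a i r c' -> c = c') /\
    (forall r r' c, entry a i r c -> entry a i r' c -> r = r').

(* OR over a_1..a_{k-1} in [n] of M1_{1,a1} /\ M2_{a1,a2} /\ ... /\ Mk_{a_{k-1},1},
   written with a path p : 'I_(k+1) -> 'I_n, p_0 = p_k = 1 (ordinal 0). *)
Definition pmm_output (n k : nat) (a : pmm_var n k -> bool) : bool :=
  [exists p : {ffun 'I_k.+1 -> 'I_n},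
    [&& val (p ord0) == 0, val (p ord_max) == 0 &
        [forall i : 'I_k, entry a i (p (inord i)) (p (inord i.+1))]]].

Definition solves_sub_pmm (n k : nat) (f : formula (pmm_var n k)) : Prop :=
  forall a : pmm_var n k -> bool, sub_perm_input a -> eval a f = pmm_output a.

(* Main.v *)
Require Import Defs.
From mathcomp Require Import all_boot.
From mathcomp Require Import zify.
Set Implicit Arguments. Unset Strict Implicit. Unset Printing Implicit Defensive.


Lemma has_flat (T : Type) (p : pred T) ss : has p (flatten ss) = has (has p) ss.
Proof. by elim: ss => //= s ss IH; rewrite has_cat IH. Qed.
Lemma all_flat (T : Type) (p : pred T) ss : all p (flatten ss) = all (all p) ss.
Proof. by elim: ss => //= s ss IH; rewrite all_cat IH. Qed.
Lemma size_flat (T : Type) (ss : seq (seq T)) : size (flatten ss) = sumn (map size ss).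
Proof. by elim: ss => //= s ss IH; rewrite size_cat IH. Qed.
Lemma sumn_flat (T : Type) (g : T -> nat) ss :
  sumn (map g (flatten ss)) = sumn (map (fun s => sumn (map g s)) ss).
Proof. by elim: ss => //= s ss IH; rewrite map_cat sumn_cat IH. Qed.
Lemma sumn_le (T : Type) (g : T -> nat) B s : (forall x, g x <= B) -> sumn (map g s) <= size s * B.
Proof. move=> H; elim: s => //= x s IH; rewrite mulSn; apply: leq_add => //. Qed.
Lemma sumn_const (T : Type) (g : T -> nat) c s : (forall x, g x = c) -> sumn (map g s) = size s * c.
Proof. move=> H; elim: s => //= x s IH; by rewrite mulSn IH H. Qed.
Lemma sumn_pos (T : Type) (g : T -> nat) s : 0 < size s -> (forall x, 0 < g x) -> 0 < sumn (map g s).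
Proof. case: s => //= x s _ H; have := H x; lia. Qed.
Lemma foldr_maxn_le (T : Type) (g : T -> nat) s B :
  (foldr maxn 0 (map g s) <= B) = all (fun x => g x <= B) s.
Proof. by elim: s => //= x s IH; rewrite geq_max IH. Qed.
Lemma foldr_maxn_eq (T : Type) (g : T -> nat) s D :
  0 < size s -> all (fun x => g x == D) s -> foldr maxn 0 (map g s) = D.
Proof.
elim: s => //= x [|y s] IH _ /andP[/eqP -> H]; first by rewrite maxn0.
by rewrite IH // maxnn.
Qed.

Definition kids V (f : formula V) : seq (formula V) :=
  match f with FAnd fs | FOr fs => fs | _ => [:: f] end.

Lemma kids_and V a (f : formula V) : ~~ is_or_gate f -> all (eval a) (kids f) = eval a f.
Proof. by case: f => //= *; rewrite andbT. Qed.
Lemma kids_or V a (f : formula V) : ~~ is_and_gate f -> has (eval a) (kids f) = eval a f.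
Proof. by case: f => //= *; rewrite orbF. Qed.
Lemma kids_size V (f : formula V) : sumn (map (@fsize V) (kids f)) = fsize f.
Proof. by case: f => //= *; rewrite addn0. Qed.
Lemma kids_flat_size V (fs : seq (formula V)) :
  sumn (map (@fsize V) (flatten (map (@kids V) fs))) = sumn (map (@fsize V) fs).
Proof. by elim: fs => //= f fs IH; rewrite map_cat sumn_cat IH kids_size. Qed.

Fixpoint lay V (b : bool) (D : nat) (f : formula V) {struct D} : bool :=
  match D with
  | 0 => if f is FLit _ true then true else false
  | D'.+1 => match f with
     | FOr fs => b && (0 < size fs) && all (lay (~~ b) D') fs
     | FAnd fs => ~~ b && (0 < size fs) && all (lay (~~ b) D') fs
     | _ => false end
  end.

Lemma lay_depth V D b (f : formula V) : lay b D f -> depth f = D.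
Proof.
elim: D b f => [|D IH] b [] //=; try by case.
- move=> fs /andP[/andP[_ s] H]; congr _.+1; apply: foldr_maxn_eq => //.
  by apply: sub_all H => g /IH ->.
- move=> fs /andP[/andP[_ s] H]; congr _.+1; apply: foldr_maxn_eq => //.
  by apply: sub_all H => g /IH ->.
Qed.

Lemma lay_mono V D b (f : formula V) : lay b D f -> monotone f.
Proof.
elim: D b f => [|D IH] b [] //=; try by move=> ? [].
- move=> fs /andP[_ H]; apply: sub_all H => g; exact: IH.
- move=> fs /andP[_ H]; apply: sub_all H => g; exact: IH.
Qed.

Lemma lay_sigma V D (f : formula V) : lay true D f -> is_sigma D f.
Proof.
case: D => [|D] H; first by rewrite /= (lay_depth H).
rewrite /= (lay_depth H) eqxx; move: H => /=; case: f => //= *; by rewrite orbT.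
Qed.
Lemma lay_pi V D (f : formula V) : lay false D f -> is_pi D f.
Proof.
case: D => [|D] H; first by rewrite /= (lay_depth H).
rewrite /= (lay_depth H) eqxx; move: H => /=; case: f => //= *; by rewrite orbT.
Qed.

Lemma lay_kids V D b (f : formula V) :
  lay b D f -> (0 < size (kids f)) && all (lay (~~ b) D.-1) (kids f).
Proof.
case: D => [|D] /=; first by case: f => //= v []; rewrite andbT.
case: f => //= fs; case: b => //= /andP[_ ->] //.
Qed.

Definition fb V B (f : formula V) := (and_fanin f <= B) && (or_fanin f <= B).
Lemma fb_and V B (fs : seq (formula V)) : fb B (FAnd fs) = (size fs <= B) && all (fb B) fs.
Proof. by rewrite /fb /= geq_max !foldr_maxn_le -andbA -all_predI. Qed.
Lemma fb_or V B (fs : seq (formula V)) : fb B (FOr fs) = (size fs <= B) && all (fb B) fs.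
Proof. by rewrite /fb /= geq_max !foldr_maxn_le andbCA -all_predI. Qed.
Lemma fb_kids V B (f : formula V) : fb B f -> all (fb B) (kids f).
Proof.
case: f => /= [b|v p|fs|fs]; rewrite ?andbT //; [rewrite fb_and|rewrite fb_or]; by case/andP.
Qed.


Definition atom n := (nat * 'I_n * 'I_n)%type.

Fixpoint dnf n (t lo : nat) (u v : 'I_n) : seq (seq (atom n)) :=
  match t with
  | 0 => [:: [:: (lo, u, v)]]
  | t'.+1 => flatten [seq [seq (lo, u, w) :: T | T <- dnf t' lo.+1 w v] | w <- enum 'I_n]
  end.
Definition dev n lo (u w : 'I_n) : seq (atom n) :=
  [seq (lo, u, a) | a <- [seq a <- enum 'I_n | a != w]].
Fixpoint cnf n (t lo : nat) (u v : 'I_n) : seq (seq (atom n)) :=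
  match t with
  | 0 => [:: [:: (lo, u, v)]]
  | t'.+1 => [seq (lo, u, w) | w <- enum 'I_n] ::
        flatten [seq [seq dev lo u w ++ C | C <- cnf t' lo.+1 w v] | w <- enum 'I_n]
  end.
Fixpoint chain n (A : nat -> 'I_n -> 'I_n -> bool) t lo (u v : 'I_n) : bool :=
  match t with
  | 0 => A lo u v
  | t'.+1 => [exists w, A lo u w && chain A t' lo.+1 w v]
  end.
Definition ev n (A : nat -> 'I_n -> 'I_n -> bool) (x : atom n) := A x.1.1 x.1.2 x.2.

Lemma has_enumP n (p : pred 'I_n) : has p (enum 'I_n) = [exists w, p w].
Proof. apply/hasP/existsP => [[w _ h]|[w h]]; by exists w; rewrite ?mem_enum. Qed.
Lemma all_enumP n (p : pred 'I_n) : all p (enum 'I_n) = [forall w, p w].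
Proof. apply/allP/forallP => [h w|h w _]; [by apply: h; rewrite mem_enum| exact: h]. Qed.

Lemma has_andl (T : Type) (b : bool) (p : pred T) s : has (fun x => b && p x) s = b && has p s.
Proof. by case: b => //=; elim: s. Qed.
Lemma all_orl (T : Type) (b : bool) (p : pred T) s : all (fun x => b || p x) s = b || all p s.
Proof. by case: b => //=; elim: s. Qed.

Lemma dnf_ok n (A : nat -> 'I_n -> 'I_n -> bool) t lo u v :
  has (all (ev A)) (dnf t lo u v) = chain A t lo u v.
Proof.
elim: t lo u => [|t IH] lo u /=; first by rewrite andbT orbF.
rewrite has_flat has_map has_enumP; apply: eq_existsb => w /=.
by rewrite has_map /preim /= has_andl IH.
Qed.

Lemma dev_ok n (A : nat -> 'I_n -> 'I_n -> bool) lo u w :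
  has (ev A) (dev lo u w) = [exists a, (a != w) && A lo u a].
Proof.
rewrite /dev has_map; apply/hasP/existsP => [[a]|[a /andP[na ha]]].
  by rewrite mem_filter => /andP[na _] h; exists a; rewrite na.
by exists a; rewrite // mem_filter mem_enum na.
Qed.

Lemma cnf_ok n (A : nat -> 'I_n -> 'I_n -> bool) t lo u v :
  (forall j r c c', A j r c -> A j r c' -> c = c') ->
  all (has (ev A)) (cnf t lo u v) = chain A t lo u v.
Proof.
move=> F; elim: t lo u => [|t IH] lo u /=; first by rewrite orbF andbT.
rewrite has_map has_enumP all_flat all_map all_enumP.
have E : forall w, preim (fun w => [seq dev lo u w ++ C | C <- cnf t lo.+1 w v]) (all (has (ev A))) w
   = [exists a, (a != w) && A lo u a] || chain A t lo.+1 w v.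
  move=> w /=; rewrite all_map /preim /=.
  rewrite -IH -dev_ok; elim: (cnf t lo.+1 w v) => [|C s IHs] /=; first by rewrite orbT.
  by rewrite has_cat IHs orb_andr.
rewrite (eq_forallb E) /preim /ev /=.
apply/andP/existsP => [[/existsP[w0 h0] /forallP H]|[w0 /andP[h0 c0]]].
  exists w0; rewrite h0 /=; case/orP: (H w0) => // /existsP[a /andP[na ha]].
  by rewrite (F _ _ _ _ ha h0) eqxx in na.
split; first by apply/existsP; exists w0.
apply/forallP => w; case: (eqVneq w w0) => [->|nw]; first by rewrite c0 orbT.
by apply/orP; left; apply/existsP; exists w0; rewrite eq_sym nw.
Qed.


Fixpoint W n (x : nat -> 'I_n -> 'I_n -> bool) lo m (u v : 'I_n) : bool :=
  match m with 0 => u == v | m'.+1 => [exists w, x lo u w && W x lo.+1 m' w v] end.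

Lemma W1 n (x : nat -> 'I_n -> 'I_n -> bool) lo u v : W x lo 1 u v = x lo u v.
Proof.
apply/existsP/idP => [[w /andP[h /eqP <-]] //|h]; by exists v; rewrite h eqxx.
Qed.

Lemma W_cat n (x : nat -> 'I_n -> 'I_n -> bool) m1 m2 lo u v :
  W x lo (m1 + m2) u v = [exists w, W x lo m1 u w && W x (lo + m1) m2 w v].
Proof.
elim: m1 lo u => [|m1 IH] lo u.
  rewrite add0n addn0; apply/idP/existsP => [h|[w /andP[/eqP -> h]]] //.
  by exists u; rewrite /= eqxx.
rewrite addSn /=; apply/existsP/existsP => [[w /andP[h1]]|[w' /andP[/existsP[w /andP[h1 h2]] h3]]].
  rewrite IH => /existsP[w' /andP[h2 h3]].
  by exists w'; rewrite -addSnnS h3 andbT; apply/existsP; exists w; rewrite h1.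
by exists w; rewrite h1 IH; apply/existsP; exists w'; rewrite h2 addSnnS.
Qed.

Lemma W_func n (x : nat -> 'I_n -> 'I_n -> bool) lo m u v v' :
  (forall j r c c', x j r c -> x j r c' -> c = c') ->
  W x lo m u v -> W x lo m u v' -> v = v'.
Proof.
move=> F; elim: m lo u => [|m IH] lo u /=; first by move=> /eqP <- /eqP.
move=> /existsP[w /andP[h1 h2]] /existsP[w' /andP[h1' h2']].
have E := F _ _ _ _ h1 h1'; subst w'; exact: IH h2 h2'.
Qed.

Lemma chain_W n (x : nat -> 'I_n -> 'I_n -> bool) lo m t j0 u v :
  chain (fun j => W x (lo + j * m) m) t j0 u v = W x (lo + j0 * m) (t.+1 * m) u v.
Proof.
elim: t j0 u => [|t IH] j0 u; first by rewrite /= mul1n.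
rewrite /= (mulSn t.+1) W_cat; apply: eq_existsb => w; rewrite IH.
by have -> : lo + j0 * m + m = lo + j0.+1 * m by rewrite mulSn; lia.
Qed.

Lemma chain_n1 n (A : nat -> 'I_n -> 'I_n -> bool) t lo u v :
  (forall a b : 'I_n, a = b) -> chain A t lo u v = all (fun j => A j u v) (iota lo t.+1).
Proof.
move=> H; elim: t lo u => [|t IH] lo u /=; first by rewrite andbT.
have E := H u v; subst u.
apply/existsP/andP => [[w /andP[h1 h2]]|[h1 h2]].
  by have E := H w v; subst w; rewrite IH in h2.
by exists v; rewrite IH /= h2 h1.
Qed.

Fixpoint cnt n t := if t is t'.+1 then 1 + n * cnt n t' else 1.
Definition natom (T : Type) (L : seq (seq T)) := sumn (map size L).

Lemma cnt_eq n t : 0 < n -> n.-1 * cnt n t + 1 = n ^ t.+1.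
Proof.
move=> n0; elim: t => [|t IH] /=; first by rewrite expn1 muln1; lia.
rewrite expnS -IH; case: n n0 {IH} => // n _ /=; nia.
Qed.

Lemma size_dev n lo (u w : 'I_n) : size (dev lo u w) = n.-1.
Proof.
rewrite /dev size_map size_filter.
have := count_predC (fun a => a != w) (enum 'I_n).
have -> : count (predC (fun a => a != w)) (enum 'I_n) = 1.
  transitivity (count (pred1 w) (enum 'I_n)).
    by apply: eq_count => a /=; rewrite negbK.
  by rewrite count_uniq_mem ?enum_uniq ?mem_enum.
rewrite size_enum_ord; lia.
Qed.

Lemma dnf_size n t lo (u v : 'I_n) : size (dnf t lo u v) = n ^ t.
Proof.
elim: t lo u => [|t IH] lo u //=.
rewrite size_flat -map_comp (@sumn_const _ _ (n ^ t)) ?size_enum_ord ?expnS //.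
by move=> w /=; rewrite size_map IH.
Qed.

Lemma dnf_terms n t lo (u v : 'I_n) : all (fun T => size T == t.+1) (dnf t lo u v).
Proof.
elim: t lo u => [|t IH] lo u //=.
rewrite all_flat all_map; apply/allP => w _ /=; rewrite all_map.
by apply: sub_all (IH lo.+1 w) => T /=.
Qed.

Lemma cnf_size n t lo (u v : 'I_n) : size (cnf t lo u v) = cnt n t.
Proof.
elim: t lo u => [|t IH] lo u //=.
rewrite size_flat -map_comp (@sumn_const _ _ (cnt n t)) ?size_enum_ord //.
by move=> w /=; rewrite size_map IH.
Qed.

Lemma cnf_clauses n t lo (u v : 'I_n) : 0 < n ->
  all (fun C => (0 < size C) && (size C <= t.+1 * n)) (cnf t lo u v).
Proof.
move=> n0; elim: t lo u => [|t IH] lo u /=; first by rewrite mul1n n0.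
rewrite size_map size_enum_ord n0 /= mulSn leq_addr /=.
rewrite all_flat all_map; apply/allP => w _ /=; rewrite all_map.
apply: sub_all (IH lo.+1 w) => C /= /andP[h1 h2]; rewrite size_cat size_dev.
apply/andP; split; first by lia.
rewrite mulSn; lia.
Qed.

Lemma cnf_natom n t lo (u v : 'I_n) : 0 < n ->
  natom (cnf t lo u v) <= t * n ^ t.+1 + n ^ t.
Proof.
move=> n0; elim: t lo u => [|t IH] lo u /=; first by rewrite /natom /=.
rewrite /natom /= size_map size_enum_ord map_flatten sumn_flatten -map_comp.
have H : forall w, sumn (map size [seq dev lo u w ++ C | C <- cnf t lo.+1 w v])
   <= cnt n t * n.-1 + (t * n ^ t.+1 + n ^ t).
  move=> w; rewrite -map_comp.
  have -> : sumn (map (size \o (fun C => dev lo u w ++ C)) (cnf t lo.+1 w v))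
    = size (cnf t lo.+1 w v) * n.-1 + natom (cnf t lo.+1 w v).
    rewrite /natom; elim: (cnf t lo.+1 w v) => //= C s ->.
    rewrite size_cat size_dev; lia.
  by rewrite cnf_size leq_add2l IH.
have := @sumn_le _ (fun w => sumn (map size [seq dev lo u w ++ C | C <- cnf t lo.+1 w v])) _ (enum 'I_n) H.
rewrite size_enum_ord => H2.
have E := cnt_eq t n0.
have E2 : n ^ t <= n ^ t.+1 by rewrite leq_pexp2l.
rewrite !expnS in E E2 H2 *.
set N := n ^ t in E E2 H2 *.
set c := cnt n t in E H2 *.
rewrite -map_comp; apply: leq_trans (leq_add (leqnn n) H2) _.
have [p Ep] : exists p, n = p.+1 by exists n.-1; lia.
clear H H2 IH; move: E E2; rewrite Ep /= => E E2; nia.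
Qed.


Definition lit V n (vr : nat -> 'I_n -> 'I_n -> V) i r c : formula V := FLit (vr i r c) true.

Fixpoint SI V n (vr : nat -> 'I_n -> 'I_n -> V) tp e lo (u v : 'I_n) : formula V :=
  match e with
  | 0 => lit vr lo u v
  | e'.+1 => FOr [seq FAnd [seq SI vr tp e' (lo + x.1.1 * tp.+1 ^ e') x.1.2 x.2 | x <- T]
                 | T <- dnf tp 0 u v]
  end.

Fixpoint SP V n (vr : nat -> 'I_n -> 'I_n -> V) tp e (b : bool) lo (u v : 'I_n) : formula V :=
  match e with
  | 0 => lit vr lo u v
  | e'.+1 => if b then
      FOr [seq FAnd (flatten [seq kids (SP vr tp e' false (lo + x.1.1 * tp.+1 ^ e') x.1.2 x.2)
                             | x <- T]) | T <- dnf tp 0 u v]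
    else FAnd [seq FOr (flatten [seq kids (SP vr tp e' true (lo + x.1.1 * tp.+1 ^ e') x.1.2 x.2)
                             | x <- C]) | C <- cnf tp 0 u v]
  end.

Definition blk tp := locked (iota 0 tp.+1).
Lemma blkE tp : blk tp = iota 0 tp.+1. Proof. by rewrite /blk -lock. Qed.

Fixpoint TR V n (vr : nat -> 'I_n -> 'I_n -> V) tp e lo (u v : 'I_n) : formula V :=
  match e with
  | 0 => lit vr lo u v
  | e'.+1 => FAnd [seq TR vr tp e' (lo + j * tp.+1 ^ e') u v | j <- blk tp]
  end.

Lemma SI_eval V n (vr : nat -> 'I_n -> 'I_n -> V) (a : V -> bool) tp e lo u v :
  eval a (SI vr tp e lo u v) = W (fun i r c => a (vr i r c)) lo (tp.+1 ^ e) u v.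
Proof.
elim: e lo u v => [|e IH] lo u v; first by rewrite expn0 W1.
rewrite /= has_map.
transitivity (has (all (ev (fun j => W (fun i r c => a (vr i r c)) (lo + j * tp.+1 ^ e) (tp.+1 ^ e))))
   (dnf tp 0 u v)).
  apply: eq_has => T /=; rewrite all_map; apply: eq_all => x /=; by rewrite IH.
by rewrite dnf_ok chain_W mul0n addn0 expnS.
Qed.

Lemma SP_not_or V n (vr : nat -> 'I_n -> 'I_n -> V) tp e lo u v :
  ~~ is_or_gate (SP vr tp e false lo u v).
Proof. by case: e. Qed.
Lemma SP_not_and V n (vr : nat -> 'I_n -> 'I_n -> V) tp e lo u v :
  ~~ is_and_gate (SP vr tp e true lo u v).
Proof. by case: e. Qed.

Lemma SP_eval V n (vr : nat -> 'I_n -> 'I_n -> V) (a : V -> bool) tp e b lo u v :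
  (forall i r c c', a (vr i r c) -> a (vr i r c') -> c = c') ->
  eval a (SP vr tp e b lo u v) = W (fun i r c => a (vr i r c)) lo (tp.+1 ^ e) u v.
Proof.
move=> F; elim: e b lo u v => [|e IH] b lo u v; first by rewrite expn0 W1.
set A := (fun j => W (fun i r c => a (vr i r c)) (lo + j * tp.+1 ^ e) (tp.+1 ^ e)).
have -> : W (fun i r c => a (vr i r c)) lo (tp.+1 ^ e.+1) u v = chain A tp 0 u v.
  by rewrite chain_W mul0n addn0 expnS.
case: b => /=.
  rewrite has_map -dnf_ok; apply: eq_has => T /=; rewrite all_flat all_map.
  by apply: eq_all => x /=; rewrite kids_and ?SP_not_or // IH.
rewrite all_map -cnf_ok; last by move=> j r c c'; apply: W_func.
apply: eq_all => C /=; rewrite has_flat has_map.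
by apply: eq_has => x /=; rewrite kids_or ?SP_not_and // IH.
Qed.

Lemma TR_eval V n (vr : nat -> 'I_n -> 'I_n -> V) (a : V -> bool) tp e lo u v :
  (forall a b : 'I_n, a = b) ->
  eval a (TR vr tp e lo u v) = W (fun i r c => a (vr i r c)) lo (tp.+1 ^ e) u v.
Proof.
move=> H; elim: e lo u v => [|e IH] lo u v; first by rewrite expn0 W1.
change (eval a (TR vr tp e.+1 lo u v)) with
  (all (eval a) [seq TR vr tp e (lo + j * tp.+1 ^ e) u v | j <- blk tp]).
rewrite all_map.
transitivity (all (fun j => W (fun i r c => a (vr i r c)) (lo + j * tp.+1 ^ e) (tp.+1 ^ e) u v)
   (blk tp)).
  by apply: eq_all => j /=; rewrite IH.
by rewrite blkE -(@chain_n1 _ (fun j => W _ (lo + j * tp.+1 ^ e) (tp.+1 ^ e))) // chain_W mul0n addn0 expnS.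
Qed.


Lemma sumn_const_in (T : eqType) (g : T -> nat) c s :
  (forall x, x \in s -> g x = c) -> sumn (map g s) = size s * c.
Proof.
elim: s => //= x s IH H; rewrite mulSn H ?mem_head // IH // => y hy.
by apply: H; rewrite in_cons hy orbT.
Qed.

Lemma cost_le (T : Type) (g : T -> nat) B (L : seq (seq T)) :
  (forall x, g x <= B) -> sumn (map (fun s => sumn (map g s)) L) <= natom L * B.
Proof.
move=> H; rewrite /natom; elim: L => //= s L IH; rewrite mulnDl.
by apply: leq_add => //; apply: sumn_le.
Qed.

Lemma kids_flat_sizeF V (X : Type) (F : X -> formula V) T :
  sumn (map (@fsize V) (flatten [seq kids (F x) | x <- T])) = sumn [seq fsize (F x) | x <- T].
Proof. by elim: T => //= x T IH; rewrite map_cat sumn_cat IH kids_size. Qed.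

Lemma dnf_natom n tp lo (u v : 'I_n) : natom (dnf tp lo u v) = n ^ tp * tp.+1.
Proof.
rewrite /natom (@sumn_const_in _ _ tp.+1) ?dnf_size // => T hT.
by have /eqP := allP (dnf_terms tp lo u v) T hT.
Qed.

Lemma SI_lay V n (vr : nat -> 'I_n -> 'I_n -> V) tp e lo u v :
  0 < n -> lay true (2 * e) (SI vr tp e lo u v).
Proof.
move=> n0; elim: e lo u v => [|e IH] lo u v //.
have -> : 2 * e.+1 = (2 * e).+2 by lia.
rewrite /= size_map dnf_size expn_gt0 n0 /= all_map; apply/allP => T hT /=.
have /eqP := allP (dnf_terms tp 0 u v) T hT.
rewrite size_map => ->; rewrite all_map; apply/allP => x _ /=; exact: IH.
Qed.

Lemma SI_size V n (vr : nat -> 'I_n -> 'I_n -> V) tp e lo u v :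
  0 < n -> fsize (SI vr tp e lo u v) <= (tp.+1 * n ^ tp.+1) ^ e.
Proof.
move=> n0; elim: e lo u v => [|e IH] lo u v //.
rewrite /= -map_comp.
under eq_map => T do rewrite /= -map_comp.
apply: leq_trans (@cost_le _ (fun x => fsize (SI vr tp e (lo + x.1.1 * tp.+1 ^ e) x.1.2 x.2)) _ (dnf tp 0 u v) _) _.
  by move=> x; apply: IH.
rewrite dnf_natom (expnS (tp.+1 * n ^ tp.+1) e); apply: leq_mul => //.
rewrite mulnC leq_mul2l leq_pexp2l //; lia.
Qed.

Lemma SI_fanin V n (vr : nat -> 'I_n -> 'I_n -> V) tp e lo u v :
  (and_fanin (SI vr tp e lo u v) <= tp.+1) && (or_fanin (SI vr tp e lo u v) <= n ^ tp).
Proof.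
elim: e lo u v => [|e IH] lo u v //=.
rewrite geq_max size_map dnf_size leqnn /= !foldr_maxn_le !all_map -all_predI.
apply/allP => T hT /=; rewrite geq_max size_map.
have /eqP -> := allP (dnf_terms tp 0 u v) T hT.
rewrite leqnn /= !foldr_maxn_le !all_map -all_predI; apply/allP => x _ /=; exact: IH.
Qed.

Definition lvl e := if e is 0 then 0 else e.+1.

Lemma SP_lay V n (vr : nat -> 'I_n -> 'I_n -> V) tp e b lo u v :
  0 < n -> lay b (lvl e) (SP vr tp e b lo u v).
Proof.
move=> n0; elim: e b lo u v => [|e IH] b lo u v //.
have Hk : forall b' lo' u' v', (0 < size (kids (SP vr tp e b' lo' u' v'))) &&
     all (lay (~~ b') e) (kids (SP vr tp e b' lo' u' v')).
  move=> b' lo' u' v'; have := lay_kids (IH b' lo' u' v'); by case: e {IH}.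
have Hk1 : forall b' lo' u' v', 0 < size (kids (SP vr tp e b' lo' u' v')).
  by move=> b' lo' u' v'; case/andP: (Hk b' lo' u' v').
have Hk2 : forall b' lo' u' v', all (lay (~~ b') e) (kids (SP vr tp e b' lo' u' v')).
  by move=> b' lo' u' v'; case/andP: (Hk b' lo' u' v').
case: b => /=.
  rewrite size_map dnf_size expn_gt0 n0 /= all_map; apply/allP => T hT /=.
  have /eqP hs := allP (dnf_terms tp 0 u v) T hT.
  rewrite size_flat -map_comp sumn_pos ?hs //=.
  rewrite all_flat all_map; apply/allP => x _ /=; exact: Hk2.
rewrite size_map cnf_size /=.
have -> : 0 < cnt n tp by case: (tp).
rewrite /= all_map; apply/allP => C hC /=.
have /andP[hs _] := allP (cnf_clauses tp 0 u v n0) C hC.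
rewrite size_flat -map_comp sumn_pos //=.
rewrite all_flat all_map; apply/allP => x _ /=; exact: Hk2.
Qed.

Lemma SP_size V n (vr : nat -> 'I_n -> 'I_n -> V) tp e b lo u v :
  0 < n -> fsize (SP vr tp e b lo u v) <= (tp.+1 * n ^ tp.+1) ^ e.
Proof.
move=> n0; elim: e b lo u v => [|e IH] b lo u v //.
case: b => /=; rewrite -map_comp.
  under eq_map => T do rewrite /= kids_flat_sizeF.
  apply: leq_trans (@cost_le _ (fun x => fsize (SP vr tp e false (lo + x.1.1 * tp.+1 ^ e) x.1.2 x.2)) _ (dnf tp 0 u v) _) _.
    by move=> x; apply: IH.
  rewrite dnf_natom (expnS (tp.+1 * n ^ tp.+1) e); apply: leq_mul => //.
  rewrite mulnC leq_mul2l leq_pexp2l //; lia.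
under eq_map => T do rewrite /= kids_flat_sizeF.
apply: leq_trans (@cost_le _ (fun x => fsize (SP vr tp e true (lo + x.1.1 * tp.+1 ^ e) x.1.2 x.2)) _ (cnf tp 0 u v) _) _.
  by move=> x; apply: IH.
rewrite (expnS (tp.+1 * n ^ tp.+1) e); apply: leq_mul => //.
apply: leq_trans (cnf_natom tp 0 u v n0) _.
have : n ^ tp <= n ^ tp.+1 by rewrite leq_pexp2l.
lia.
Qed.

Lemma SP_kids V n (vr : nat -> 'I_n -> 'I_n -> V) tp e lo u v : 0 < n ->
  (size (kids (SP vr tp e false lo u v)) <= cnt n tp) &&
  (size (kids (SP vr tp e true lo u v)) <= n ^ tp).
Proof.
move=> n0; case: e => [|e] /=.
  by rewrite expn_gt0 n0 andbT; case: tp.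
by rewrite !size_map cnf_size dnf_size !leqnn.
Qed.

Lemma SP_fb V n (vr : nat -> 'I_n -> 'I_n -> V) tp e b lo u v :
  1 < n -> fb (tp.+1 * n ^ tp.+1) (SP vr tp e b lo u v).
Proof.
move=> n1; have n0 : 0 < n by lia.
have Ec := cnt_eq tp n0.
have Hc : cnt n tp <= n ^ tp.+1.
  have : cnt n tp <= n.-1 * cnt n tp by rewrite leq_pmull //; lia.
  move: Ec; set p := n.-1 * cnt n tp; lia.
have Hn : n ^ tp <= n ^ tp.+1 by rewrite leq_pexp2l.
have HB : n ^ tp.+1 <= tp.+1 * n ^ tp.+1 by rewrite leq_pmull.
elim: e b lo u v => [|e IH] b lo u v; first by [].
case: b => /=.
  rewrite fb_or size_map dnf_size (leq_trans Hn HB) /= all_map; apply/allP => T hT /=.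
  have /eqP hs := allP (dnf_terms tp 0 u v) T hT.
  rewrite fb_and size_flat -map_comp; apply/andP; split.
    apply: leq_trans (@sumn_le _ _ (cnt n tp) T _) _.
      by move=> x /=; case/andP: (SP_kids vr tp e (lo + x.1.1 * tp.+1 ^ e) x.1.2 x.2 n0).
    by rewrite hs leq_mul2l Hc orbT.
  rewrite all_flat all_map; apply/allP => x _ /=; exact: fb_kids.
rewrite fb_and size_map cnf_size (leq_trans Hc HB) /= all_map; apply/allP => C hC /=.
have /andP[_ hs] := allP (cnf_clauses tp 0 u v n0) C hC.
rewrite fb_or size_flat -map_comp; apply/andP; split.
  apply: leq_trans (@sumn_le _ _ (n ^ tp) C _) _.
    by move=> x /=; case/andP: (SP_kids vr tp e (lo + x.1.1 * tp.+1 ^ e) x.1.2 x.2 n0).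
  apply: leq_trans (leq_mul hs (leqnn _)) _; rewrite expnS; lia.
rewrite all_flat all_map; apply/allP => x _ /=; exact: fb_kids.
Qed.

Lemma size_blk tp : size (blk tp) = tp.+1. Proof. by rewrite blkE size_iota. Qed.

Lemma TR_depth V n (vr : nat -> 'I_n -> 'I_n -> V) tp e lo u v : depth (TR vr tp e lo u v) = e.
Proof.
elim: e lo u v => [|e IH] lo u v //=; congr _.+1.
apply: foldr_maxn_eq; first by rewrite size_map blkE size_iota.
by rewrite all_map; apply/allP => j _ /=; rewrite IH.
Qed.

Lemma TR_props V n (vr : nat -> 'I_n -> 'I_n -> V) tp e lo u v :
  [&& monotone (TR vr tp e lo u v), and_fanin (TR vr tp e lo u v) <= tp.+1,
      or_fanin (TR vr tp e lo u v) == 0 & fsize (TR vr tp e lo u v) == tp.+1 ^ e].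
Proof.
elim: e lo u v => [|e IH] lo u v //=.
rewrite all_map geq_max size_map size_blk leqnn foldr_maxn_le all_map /=.
have E : forall j, [&& monotone (TR vr tp e (lo + j * tp.+1 ^ e) u v),
      and_fanin (TR vr tp e (lo + j * tp.+1 ^ e) u v) <= tp.+1,
      or_fanin (TR vr tp e (lo + j * tp.+1 ^ e) u v) == 0 &
      fsize (TR vr tp e (lo + j * tp.+1 ^ e) u v) == tp.+1 ^ e] by move=> j; apply: IH.
apply/and4P; split.
- by apply/allP => j _ /=; case/and4P: (E j).
- by apply/allP => j _ /=; case/and4P: (E j).
- rewrite -leqn0 foldr_maxn_le all_map; apply/allP => j _ /=; case/and4P: (E j) => _ _ /eqP -> //.
- rewrite -map_comp (@sumn_const _ _ (tp.+1 ^ e)) ?size_blk ?expnS //.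
  by move=> j /=; case/and4P: (E j) => _ _ _ /eqP.
Qed.


Lemma W_path n (x : nat -> 'I_n -> 'I_n -> bool) lo m u v :
  W x lo m u v <-> exists p : nat -> 'I_n, [/\ p 0 = u, p m = v &
      forall i, i < m -> x (lo + i) (p i) (p i.+1)].
Proof.
elim: m lo u => [|m IH] lo u /=.
  split => [/eqP <-|[p [<- <- _]]] //; by exists (fun _ => u).
split.
  move=> /existsP[w /andP[h1 /IH[p [p0 pm H]]]].
  exists (fun i => if i is i'.+1 then p i' else u); split => //.
  case=> [|i] hi; first by rewrite addn0 p0.
  by rewrite -addSnnS; apply: H.
move=> [p [p0 pm H]]; apply/existsP; exists (p 1).
have := H 0 (ltn0Sn _); rewrite addn0 p0 => ->; apply/IH.
exists (fun i => p i.+1); split => // i hi.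
by rewrite addSnnS; apply: H.
Qed.

Lemma out_W n k (a : pmm_var n.+1 k.+1 -> bool) :
  W (fun i r c => a (inord i, r, c)) 0 k.+1 ord0 ord0 = pmm_output a.
Proof.
apply/idP/existsP.
  move/W_path => [p [p0 pk H]].
  exists [ffun i : 'I_k.+2 => p i]; rewrite !ffunE /= p0 pk eqxx /=.
  apply/forallP => i; have hi := ltn_ord i.
  rewrite /entry !ffunE !inordK; try lia.
  by have := H i (ltn_ord i); rewrite add0n inord_val.
move=> [q /and3P[/eqP q0 /eqP qk /forallP H]]; apply/W_path.
exists (fun j => q (inord j)); split.
- have -> : (inord 0 : 'I_k.+2) = ord0 by apply: val_inj; rewrite /= inordK.
  by apply: val_inj; rewrite /= q0.
- have -> : (inord k.+1 : 'I_k.+2) = ord_max by apply: val_inj; rewrite /= inordK.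
  by apply: val_inj; rewrite /= qk.
- move=> i hi; have := H (Ordinal hi); rewrite /entry add0n.
  by have -> : (inord i : 'I_k.+1) = Ordinal hi by apply: val_inj; rewrite /= inordK.
Qed.

Lemma is_sigma_S V d (f : formula V) :
  is_sigma d.+1 f = is_pi d f || ((depth f == d.+1) && is_or_gate f).
Proof. by []. Qed.
Lemma is_pi_S V d (f : formula V) :
  is_pi d.+1 f = is_sigma d f || ((depth f == d.+1) && is_and_gate f).
Proof. by []. Qed.

Theorem proposition1p3 (n k d t : nat) :
  0 < n -> 0 < k -> 0 < d -> t ^ d = k ->
  (exists f : formula (pmm_var n k),
      [/\ monotone f, solves_sub_pmm f, fsize f <= k * n ^ (d * t),
          is_sigma (2 * d) f & (and_fanin f <= t) && (or_fanin f <= n ^ t)])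
  /\
  (exists f : formula (pmm_var n k),
      [/\ monotone f, solves_sub_pmm f, fsize f <= k * n ^ (d * t),
          is_sigma d.+1 f & fanin f <= t * n ^ t])
  /\
  (exists f : formula (pmm_var n k),
      [/\ monotone f, solves_sub_pmm f, fsize f <= k * n ^ (d * t),
          is_pi d.+1 f & fanin f <= t * n ^ t]).
Proof.
move=> n0 k0 d0 Htk.
case: n n0 => // n _.
case: k k0 Htk => // k _ Htk.
case: t Htk => [|tp] Htk; first by rewrite exp0n in Htk.
pose vr := fun i (r c : 'I_n.+1) => ((inord i : 'I_k.+1), r, c) : pmm_var n.+1 k.+1.
have Hsz : (tp.+1 * n.+1 ^ tp.+1) ^ d = k.+1 * n.+1 ^ (d * tp.+1).
  by rewrite expnMn Htk -expnM (mulnC tp.+1 d).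
have Hfun : forall a : pmm_var n.+1 k.+1 -> bool, sub_perm_input a ->
    forall i r c c', a (vr i r c) -> a (vr i r c') -> c = c'.
  by move=> a Ha i r c c'; apply: (Ha (inord i)).1.
have Hsol : forall f : formula (pmm_var n.+1 k.+1),
    (forall a, sub_perm_input a -> eval a f = W (fun i r c => a (vr i r c)) 0 (tp.+1 ^ d) ord0 ord0) ->
    solves_sub_pmm f.
  by move=> f Hf a Ha; rewrite Hf // Htk out_W.
split; last split.
- exists (SI vr tp d 0 ord0 ord0); split.
  + exact: lay_mono (SI_lay vr tp d 0 ord0 ord0 (ltn0Sn n)).
  + by apply: Hsol => a _; rewrite SI_eval.
  + by rewrite -Hsz; apply: SI_size.
  + exact: lay_sigma (SI_lay vr tp d 0 ord0 ord0 (ltn0Sn n)).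
  + case/andP: (SI_fanin vr tp d 0 ord0 ord0) => -> h /=.
    by apply: leq_trans h _; rewrite leq_pexp2l.
- case: n vr Hsz Hfun Hsol => [|n] vr Hsz Hfun Hsol.
    have H1 : forall a b : 'I_1, a = b by move=> [[]//?] [[]//?]; apply: val_inj.
    case/and4P: (TR_props vr tp d 0 ord0 ord0) => hm ha /eqP ho /eqP hs.
    exists (TR vr tp d 0 ord0 ord0); split => //.
    + by apply: Hsol => a _; rewrite TR_eval.
    + by rewrite hs Htk exp1n muln1.
    + case: d {Hsz Hsol hm ha ho hs Htk} d0 => // d _.
      set f := TR vr tp d.+1 0 ord0 ord0.
      have Df : depth f = d.+1 by rewrite /f TR_depth.
      have Af : is_and_gate f by [].
      by rewrite is_sigma_S is_pi_S Df eqxx Af orbT.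
    + by rewrite /fanin ho maxn0 exp1n muln1.
  have L := SP_lay vr tp d true 0 ord0 ord0 (ltn0Sn n.+1).
  have Ld : lvl d = d.+1 by case: d d0 {L Hsz Hsol Htk}.
  rewrite Ld in L.
  exists (SP vr tp d true 0 ord0 ord0); split.
  + exact: lay_mono L.
  + by apply: Hsol => a Ha; rewrite SP_eval //; apply: Hfun.
  + by rewrite -Hsz; apply: SP_size.
  + exact: lay_sigma L.
  + by have /andP[h1 h2] := SP_fb vr tp d true 0 ord0 ord0 (isT : 1 < n.+2); rewrite /fanin geq_max h1.
- case: n vr Hsz Hfun Hsol => [|n] vr Hsz Hfun Hsol.
    have H1 : forall a b : 'I_1, a = b by move=> [[]//?] [[]//?]; apply: val_inj.
    case/and4P: (TR_props vr tp d 0 ord0 ord0) => hm ha /eqP ho /eqP hs.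
    exists (FAnd [:: TR vr tp d 0 ord0 ord0]); split => /=.
    + by rewrite hm.
    + by apply: Hsol => a _ /=; rewrite TR_eval // andbT.
    + by rewrite addn0 hs Htk exp1n muln1.
    + by rewrite TR_depth maxn0 eqxx orbT.
    + rewrite /fanin /= ho !maxn0 exp1n muln1 geq_max ha andbT; lia.
  have L := SP_lay vr tp d false 0 ord0 ord0 (ltn0Sn n.+1).
  have Ld : lvl d = d.+1 by case: d d0 {L Hsz Hsol Htk}.
  rewrite Ld in L.
  exists (SP vr tp d false 0 ord0 ord0); split.
  + exact: lay_mono L.
  + by apply: Hsol => a Ha; rewrite SP_eval //; apply: Hfun.
  + by rewrite -Hsz; apply: SP_size.
  + exact: lay_pi L.
  + by have /andP[h1 h2] := SP_fb vr tp d false 0 ord0 ord0 (isT : 1 < n.+2); rewrite /fanin geq_max h1.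
Qed.
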